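(* For a nonempty finite subset $E\subseteq\mathbb{N}$, the filter $\mathcal{F}_E$ is a maximal element of the poset $\mathfrak{F}\setminus\{\mathcal{F}_\infty\}$ if and only if there exists an odd prime $p\notin\Pi_E$ such that $A_E=\{2,p\}$.
   Context: $\mathbb{N}=\{1,2,\dots\}$, $\mathbb{N}_0=\{0\}\cup\mathbb{N}$, $\Pi$ the set of primes, $\Pi_z$ the set of prime divisors of $z$. The Kirch topology $\tau_K$ on $\mathbb{N}$ is generated by the base of all $a+b\mathbb{N}_0=\{a+bn:n\in\mathbb{N}_0\}$ with $a,b\in\mathbb{N}$ coprime and $b$ square-free. Closures $\overline{U}$ are in $\tau_K$; $\tau_x=\{U\in\tau_K:x\in U\}$. For finite $E\subseteq\mathbb{N}$, $\mathcal{F}_E=\{B\subseteq\mathbb{N}:\exists (U_x)_{x\in E}\in\prod_{x\in E}\tau_x\ (\bigcap_{x\in E}\overline{U_x}\subseteq B)\}$ (with $\mathcal{F}_\emptyset=\{\mathbb{N}\}$); $\mathcal{F}_\infty=\{B\subseteq\mathbb{N}:\exists n\in\mathbb{N}\ \exists U_1,\dots,U_n\in\tau_K\setminus\{\emptyset\}\ (\overline{U_1}\cap\dots\cap\overline{U_n}\subseteq B)\}$; and $\mathfrak{F}=\{\mathcal{F}_E:E\subseteq\mathbb{N}\text{ finite}\}\cup\{\mathcal{F}_\infty\}$, ordered by inclusion. For nonempty finite $E$: $\Pi_E=\bigcap_{z\in E}\Pi_z$ and $A_E=\{p\in\Pi:\exists k\in\mathbb{N}\ (E\subseteq p\mathbb{Z}\cup(k+p\mathbb{Z}))\}$.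 *)

(* Defs.v *)
(* MathComp (boot) world. Subsets of N = {1,2,...} are predicates on nat;
   only their values on positive naturals matter. *)
From mathcomp Require Import all_boot.
Set Implicit Arguments.
Unset Strict Implicit.
Unset Printing Implicit Defensive.

Definition nset := nat -> Prop.

Definition squarefree (b : nat) : Prop :=
  forall p, prime p -> ~ (p ^ 2 %| b).

Definition aprog (a b : nat) : nset := fun x => exists n, x = a + b * n.

Definition kirch_basic (a b : nat) : Prop :=
  0 < a /\ 0 < b /\ coprime a b /\ squarefree b.

Definition kirch_open (U : nset) : Prop :=
  (forall x, U x -> 0 < x) /\
  forall x, U x -> exists a b, kirch_basic a b /\ aprog a b x /\
                               (forall y, aprog a b y -> U y).

Definition kclosure (U : nset) : nset :=
  fun x => 0 < x /\ forall V, kirch_open V -> V x -> exists y, V y /\ U y.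

Definition FE (E : seq nat) : nset -> Prop :=
  fun B => exists U : nat -> nset,
    (forall x, x \in E -> kirch_open (U x) /\ U x x) /\
    (forall y, 0 < y -> (forall x, x \in E -> kclosure (U x) y) -> B y).

Definition Finf : nset -> Prop :=
  fun B => exists (n : nat) (Us : nat -> nset),
    0 < n /\
    (forall i, i < n -> kirch_open (Us i) /\ exists y, Us i y) /\
    (forall y, 0 < y -> (forall i, i < n -> kclosure (Us i) y) -> B y).

Definition fsub (F G : nset -> Prop) : Prop := forall B, F B -> G B.
Definition feq (F G : nset -> Prop) : Prop := fsub F G /\ fsub G F.

Definition finite_pos (E : seq nat) : Prop := forall x, x \in E -> 0 < x.

Definition maximal_FE (E : seq nat) : Prop :=
  ~ feq (FE E) Finf /\
  forall E' : seq nat, finite_pos E' -> ~ feq (FE E') Finf ->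
    fsub (FE E) (FE E') -> fsub (FE E') (FE E).

Definition in_PiE (E : seq nat) (p : nat) : Prop :=
  prime p /\ forall z, z \in E -> p %| z.

Definition in_AE (E : seq nat) (p : nat) : Prop :=
  prime p /\ exists k, 0 < k /\
    forall z, z \in E -> (p %| z) \/ z = k %[mod p].

(* Main.v *)
Require Import Defs.
From mathcomp Require Import all_boot.
From mathcomp Require Import zify.
From Stdlib Require Import Classical.
Set Implicit Arguments.
Unset Strict Implicit.

Lemma coprime_by_primes m n :
  (forall p, prime p -> p %| m -> p %| n -> False) -> coprime m n.
Proof.
move=> H; case: (boolP (coprime m n)) => // Hc; exfalso.
have [h0|hpos] := posnP (gcdn m n).
  have hm : m = 0 by have := dvdn_gcdl m n; rewrite h0 dvd0n => /eqP.
  have hn : n = 0 by have := dvdn_gcdr m n; rewrite h0 dvd0n => /eqP.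
  by apply: (H 2) => //; rewrite ?hm ?hn.
have h1 : 1 < gcdn m n by move: Hc; rewrite /coprime; lia.
apply: (H (pdiv (gcdn m n))); first exact: pdiv_prime.
  exact: dvdn_trans (pdiv_dvd _) (dvdn_gcdl _ _).
exact: dvdn_trans (pdiv_dvd _) (dvdn_gcdr _ _).
Qed.

Lemma sqf_coprime m n : squarefree (m * n) -> coprime m n.
Proof.
move=> H; apply: coprime_by_primes => p pp pm pn.
by apply: (H p pp); rewrite expnS expn1; apply: dvdn_mul.
Qed.

Lemma sqf_dvd m n : m %| n -> squarefree n -> squarefree m.
Proof. by move=> mn H p pp pm; apply: (H p pp); apply: dvdn_trans pm mn. Qed.

Lemma prime_not_dvd_coprime m n p : coprime m n -> prime p -> p %| m -> ~~ (p %| n).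
Proof.
move=> c pp pm; rewrite -prime_coprime //; exact: coprime_dvdl pm c.
Qed.

Lemma coprime_aprog a b n : coprime a b -> coprime (a + b * n) b.
Proof. by move=> c; rewrite -coprime_modl addnC mulnC modnMDl coprime_modl. Qed.

Lemma aprog_mod a b x q : aprog a b x -> q %| b -> x = a %[mod q].
Proof.
move=> [n ->] qb; apply/eqP; rewrite eqn_mod_dvd ?leq_addr // addKn.
exact: dvdn_mulr.
Qed.

Lemma from_mod c d z : c <= z -> z = c %[mod d] -> aprog c d z.
Proof.
move=> cz H; have /dvdnP [k hk] : d %| z - c by rewrite -eqn_mod_dvd // H.
by exists k; lia.
Qed.

Lemma basic_open a b : kirch_basic a b -> kirch_open (aprog a b).
Proof.
move=> [a0 [b0 [cab sqb]]]; split.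
  by move=> x [n ->]; lia.
move=> x [n ->]; exists (a + b * n), b; split.
  split; first lia. split => //; split => //; exact: coprime_aprog.
split; first by exists 0; lia.
by move=> y [m ->]; exists (n + m); lia.
Qed.

Lemma prime_sqf q : prime q -> squarefree q.
Proof.
move=> pq p pp H.
have pq' : p %| q by apply: dvdn_trans H; apply: dvdn_exp.
have : p = q by apply/eqP; rewrite -dvdn_prime2.
move=> e; subst p.
have := dvdn_leq (prime_gt0 pq) H.
rewrite expnS expn1 -{3}(muln1 q) leq_pmul2l ?prime_gt0 // => h.
have := prime_gt1 pq; lia.
Qed.

Lemma prime_basic q y : prime q -> ~~ (q %| y) -> 0 < y -> kirch_basic y q.
Proof.
move=> pq nd y0; split => //; split; first exact: prime_gt0.
split; last exact: prime_sqf.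
by rewrite coprime_sym prime_coprime.
Qed.

Lemma sq_mod g u v : 0 < g -> squarefree g ->
  (forall q, prime q -> q %| g -> u = v %[mod q]) -> u = v %[mod g].
Proof.
elim/ltn_ind: g => g IH g0 sg H.
have [g1|g1] := leqP g 1.
  have -> : g = 1 by lia.
  by rewrite !modn1.
set p := pdiv g.
have pp : prime p by exact: pdiv_prime.
have pg : p %| g := pdiv_dvd g.
have ge : g = p * (g %/ p) by rewrite mulnC divnK.
have g'0 : 0 < g %/ p by move: g0; rewrite {1}ge muln_gt0 => /andP [].
have cp : coprime p (g %/ p) by apply: sqf_coprime; rewrite -ge.
apply/eqP; rewrite ge chinese_remainder //; apply/andP; split; apply/eqP.
  by apply: H.
apply: IH => //.
- by rewrite {2}ge ltn_Pmull // prime_gt1.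
- apply: sqf_dvd sg; rewrite {2}ge; exact: dvdn_mull.
- move=> q pq qd; apply: H => //; apply: dvdn_trans qd _; rewrite {2}ge; exact: dvdn_mull.
Qed.

Lemma inter a b c d : kirch_basic c d -> kirch_basic a b ->
  c = a %[mod gcdn d b] -> exists z, aprog c d z /\ aprog a b z.
Proof.
move=> [c0 [d0 [ccd sqd]]] [a0 [b0 [cab sqb]]] H.
set g := gcdn d b.
set b' := b %/ g.
have gb : g %| b := dvdn_gcdr d b.
have be : b = b' * g by rewrite divnK.
have cbg : coprime b' g by apply: sqf_coprime; rewrite -be.
have cdb : coprime d b'.
  apply: coprime_by_primes => p pp pd pb'.
  have pb : p %| b by rewrite be; exact: dvdn_mulr.
  have pg : p %| g by rewrite /g dvdn_gcd pd pb.
  by have := prime_not_dvd_coprime cbg pp pb'; rewrite pg.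
set z0 := chinese d b' c a.
have z0d : z0 = c %[mod d] := chinese_modl cdb c a.
have z0b' : z0 = a %[mod b'] := chinese_modr cdb c a.
have z0g : z0 = a %[mod g].
  by rewrite -(modn_dvdm z0 (dvdn_gcdl d b)) z0d (modn_dvdm c (dvdn_gcdl d b)) H.
have z0b : z0 = a %[mod b].
  by apply/eqP; rewrite be chinese_remainder // z0b' z0g !eqxx.
clearbody z0 b' g.
have db : 0 < d * b by rewrite muln_gt0 d0 b0.
have h : c + a <= (c + a) * (d * b) by rewrite leq_pmulr.
exists (z0 + (c + a) * (d * b)); split; apply: from_mod.
- exact: leq_trans (leq_addr a c) (leq_trans h (leq_addl _ _)).
- have e : (c + a) * (d * b) = ((c + a) * b) * d by rewrite [d * b]mulnC mulnA.
  by rewrite e addnC modnMDl.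
- exact: leq_trans (leq_addl c a) (leq_trans h (leq_addl _ _)).
- have e : (c + a) * (d * b) = ((c + a) * d) * b by rewrite mulnA.
  by rewrite e addnC modnMDl.
Qed.

Definition good (E : seq nat) (q y : nat) : Prop :=
  forall x, x \in E -> ~~ (q %| x) -> (q %| y) \/ (y = x %[mod q]).

Lemma closure_nbhd U x : kirch_open U -> U x -> exists N, forall y, 0 < y ->
  (forall q, prime q -> q < N -> good [:: x] q y) -> kclosure U y.
Proof.
move=> [Upos HU] Ux; have [a [b [Bab [Hx HabU]]]] := HU x Ux.
have Bab' := Bab; move: Bab' => [a0 [b0 [cab sqb]]].
exists b.+1 => y y0 Hg; split => // V [Vpos HV] Vy.
have [c [d [Bcd [Hy HcdV]]]] := HV y Vy.
have Bcd' := Bcd; move: Bcd' => [c0 [d0 [ccd sqd]]].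
have [z [zc za]] : exists z, aprog c d z /\ aprog a b z.
  apply: inter => //.
  apply: sq_mod; [by rewrite gcdn_gt0 d0 | exact: sqf_dvd (dvdn_gcdl _ _) sqd | ].
  move=> q pq qg.
  have qd : q %| d := dvdn_trans qg (dvdn_gcdl _ _).
  have qb : q %| b := dvdn_trans qg (dvdn_gcdr _ _).
  have xa : x = a %[mod q] := aprog_mod Hx qb.
  have yc : y = c %[mod q] := aprog_mod Hy qd.
  have nqx : ~~ (q %| x).
    apply: (prime_not_dvd_coprime (m:=b)) => //; rewrite coprime_sym.
    by case: Hx => n ->; exact: coprime_aprog.
  have nqy : ~~ (q %| y).
    apply: (prime_not_dvd_coprime (m:=d)) => //; rewrite coprime_sym.
    by case: Hy => n ->; exact: coprime_aprog.
  have qN : q < b.+1 by rewrite ltnS dvdn_leq.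
  have [qy|yx] := Hg q pq qN x (mem_head _ _) nqx.
  - by rewrite qy in nqy.
  - by rewrite -yc yx xa.
by exists z; split; [exact: HcdV | exact: HabU].
Qed.

Section PL.
Variable S : seq nat.
Hypothesis Sp : forall r, r \in S -> prime r.

Lemma prodS_gt0 : 0 < \prod_(r <- S) r.
Proof.
move: Sp; elim: S => [|r s IH] H; rewrite ?big_nil ?big_cons //.
rewrite muln_gt0 prime_gt0 ?H ?mem_head //=; apply: IH => t ts.
by apply: H; rewrite inE ts orbT.
Qed.

Lemma dvd_prodS r : r \in S -> r %| \prod_(t <- S) t.
Proof.
elim: S => [|t s IH] //; rewrite inE big_cons => /orP [/eqP ->|rs].
  exact: dvdn_mulr.
by apply: dvdn_mull; apply: IH.
Qed.

Lemma prime_dvd_prodS q : prime q -> q %| \prod_(t <- S) t -> q \in S.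
Proof.
move: Sp; elim: S => [|t s IH] H pq; rewrite ?big_nil ?big_cons.
  by rewrite dvdn1 => /eqP e; move: pq; rewrite e.
rewrite Euclid_dvdM // => /orP [qt|qs].
  have pt : prime t by apply: H; rewrite mem_head.
  by move: qt; rewrite dvdn_prime2 // => /eqP ->; rewrite mem_head.
rewrite inE; apply/orP; right; apply: IH => // u us; by apply: H; rewrite inE us orbT.
Qed.

Lemma coprime_prodS x : (forall r, r \in S -> coprime x r) -> coprime x (\prod_(t <- S) t).
Proof.
elim: S => [|t s IH] H; rewrite ?big_nil ?big_cons ?coprimen1 //.
rewrite coprimeMr H ?mem_head //=; apply: IH => u us; by apply: H; rewrite inE us orbT.
Qed.

End PL.

Lemma sqf_prodS (S : seq nat) : (forall r, r \in S -> prime r) -> uniq S -> squarefree (\prod_(t <- S) t).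
Proof.
elim: S => [|t s IH] H /= u; rewrite ?big_nil ?big_cons.
  move=> p pp Hd; have : p %| 1 by apply: dvdn_trans Hd; rewrite expnS dvdn_mulr.
  by rewrite dvdn1 => /eqP e; move: pp; rewrite e.
move: u => /andP [ts us].
have Hs : forall r, r \in s -> prime r by move=> r rs; apply: H; rewrite inE rs orbT.
have pt : prime t by apply: H; rewrite mem_head.
move=> p pp; case: (eqVneq p t) => [->|pt'].
  rewrite expnS expn1 dvdn_pmul2l ?prime_gt0 // => ds.
  by move: ts; rewrite (prime_dvd_prodS Hs pt ds).
rewrite Gauss_dvdr; first by apply: IH.
by rewrite coprime_pexpl // prime_coprime // dvdn_prime2.
Qed.

Definition Pn (N x : nat) := \prod_(q <- [seq q <- iota 0 N | prime q && ~~ (q %| x)]) q.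

Lemma Pn_primes N x r : r \in [seq q <- iota 0 N | prime q && ~~ (q %| x)] -> prime r.
Proof. by rewrite mem_filter => /andP [/andP [] ]. Qed.

Lemma closure_small x N : 0 < x ->
  kirch_open (aprog x (Pn N x)) /\ aprog x (Pn N x) x /\
  forall y, kclosure (aprog x (Pn N x)) y -> forall q, prime q -> q < N -> good [:: x] q y.
Proof.
move=> x0; split; [apply: basic_open; split => //; split; [|split] | split].
- exact: prodS_gt0 (@Pn_primes N x).
- apply: coprime_prodS => r.
  by rewrite mem_filter => /andP [/andP [pr nrx] _]; rewrite coprime_sym prime_coprime.
- apply: sqf_prodS (@Pn_primes N x) _.
  by apply: filter_uniq; apply: iota_uniq.
- by exists 0; lia.
move=> y [y0 Hcl] q pq qN x'; rewrite inE => /eqP -> nqx.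
case: (boolP (q %| y)) => qy; [by left | right].
have yq : aprog y q y by exists 0; lia.
have [z [zy zx]] := Hcl (aprog y q) (basic_open (prime_basic pq qy y0)) yq.
have qP : q %| Pn N x.
  apply: dvd_prodS; rewrite mem_filter pq nqx mem_iota /=; lia.
by rewrite -(aprog_mod zy (dvdnn q)) (aprog_mod zx qP).
Qed.

Definition G (E : seq nat) (B : nset) := exists N, forall y, 0 < y ->
  (forall q, prime q -> q < N -> good E q y) -> B y.

Lemma good_sub E q y x : good E q y -> x \in E -> good [:: x] q y.
Proof. by move=> H xE x'; rewrite inE => /eqP ->; apply: H. Qed.

Lemma good_cons E q y x : good [:: x] q y -> good E q y -> good (x :: E) q y.
Proof.
move=> H1 H2 x'; rewrite inE => /orP [/eqP ->|]; first by apply: H1; rewrite mem_head.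
exact: H2.
Qed.

Lemma FE_G E B : FE E B -> G E B.
Proof.
move=> [U [HU HB]].
suff HS : forall s, {subset s <= E} -> exists N, forall y, 0 < y ->
   (forall q, prime q -> q < N -> good s q y) -> forall x, x \in s -> kclosure (U x) y.
  have [N HN] := HS E (fun x xE => xE).
  by exists N => y y0 Hg; apply: HB => //; apply: HN.
elim=> [|x s IH] sE.
  by exists 0.
have [N1 H1] : exists N, forall y, 0 < y ->
  (forall q, prime q -> q < N -> good [:: x] q y) -> kclosure (U x) y.
  have [Uo Ux] := HU x (sE x (mem_head _ _)).
  exact: closure_nbhd.
have [N2 H2] : exists N, forall y, 0 < y ->
   (forall q, prime q -> q < N -> good s q y) -> forall x, x \in s -> kclosure (U x) y.
  by apply: IH => t ts; apply: sE; rewrite inE ts orbT.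
exists (N1 + N2) => y y0 Hg x'; rewrite inE => /orP [/eqP ->|xs].
  apply: H1 => // q pq qN; apply: (good_sub (E := x :: s)); last exact: mem_head.
  apply: Hg => //; lia.
apply: H2 => // q pq qN x'' x''s; apply: (Hg q pq) => //; first lia.
by rewrite inE x''s orbT.
Qed.

Lemma G_FE E B : finite_pos E -> G E B -> FE E B.
Proof.
move=> Ep [N HN]; exists (fun x => aprog x (Pn N x)); split.
  by move=> x xE; have [h1 [h2 _]] := closure_small N (Ep x xE).
move=> y y0 Hc; apply: HN => // q pq qN x xE nqx.
have [_ [_ h3]] := closure_small N (Ep x xE).
by apply: (h3 y (Hc x xE) q pq qN x (mem_head _ _)).
Qed.

Lemma FE_Finf E B : E <> [::] -> FE E B -> Finf B.
Proof.
move=> Ene [U [HU HB]]; exists (size E), (fun i => U (nth 0 E i)); split.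
  by case: E Ene {HU HB} => // _ _ .
split.
  move=> i iE; have [h1 h2] := HU _ (mem_nth 0 iE); split => //.
  by exists (nth 0 E i).
move=> y y0 H; apply: HB => // x xE.
by rewrite -(nth_index 0 xE); apply: H; rewrite index_mem.
Qed.

Lemma Finf_G B : Finf B -> exists A, G A B.
Proof.
move=> [n [Us [n0 [HU HB]]]].
suff HS : forall m, m <= n -> exists A N, forall y, 0 < y ->
   (forall q, prime q -> q < N -> good A q y) -> forall i, i < m -> kclosure (Us i) y.
  have [A [N HN]] := HS n (leqnn n).
  by exists A, N => y y0 Hg; apply: HB => // i; apply: HN.
elim=> [|m IH] mn.
  by exists [::], 0.
have [A [N HN]] := IH (ltnW mn).
have [Uo [a Ua]] := HU m mn.
have [N1 H1] := closure_nbhd Uo Ua.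
exists (a :: A), (N1 + N) => y y0 Hg i; rewrite ltnS leq_eqVlt => /orP [/eqP ->|im].
  apply: H1 => // q pq qN; apply: (good_sub (E := a :: A)); last exact: mem_head.
  apply: Hg => //; lia.
apply: HN => // q pq qN x xs; apply: (Hg q pq) => //; first lia.
by rewrite inE xs orbT.
Qed.

Lemma good_dvd E q y : q %| y -> good E q y.
Proof. by move=> H x _ _; left. Qed.

Lemma good_2 E y : good E 2 y.
Proof.
move=> x _; rewrite dvdn2 negbK => ox.
case: (boolP (odd y)) => oy; [right | left]; last by rewrite dvdn2.
by rewrite !modn2 ox oy.
Qed.

Lemma good_mod E q y y' : y = y' %[mod q] -> good E q y -> good E q y'.
Proof.
move=> e H x xE nx; have [h|h] := H x xE nx.
  by left; move: h; rewrite /dvdn e.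
by right; rewrite -e.
Qed.

Lemma good_nil q y : good [::] q y.
Proof. by []. Qed.

Lemma good_notA E q y : prime q -> ~ in_AE E q -> good E q y -> q %| y.
Proof.
move=> pq nA H; case: (boolP (q %| y)) => // qy; exfalso; apply: nA.
split => //; exists y; split; first by have [y0|//] := posnP y; rewrite y0 dvdn0 in qy.
move=> z zE; case: (boolP (q %| z)) => qz; [by left | right].
have [h|h] := H z zE qz; first by rewrite h in qy.
by [].
Qed.

Lemma AE_k0 E q : in_AE E q -> exists k0, ~~ (q %| k0) /\
  forall z, z \in E -> (q %| z) \/ z = k0 %[mod q].
Proof.
move=> [pq [k [k0 H]]]; case: (boolP (q %| k)) => qk; last by exists k.
exists 1; split; first by rewrite dvdn1; apply/eqP => e; move: pq; rewrite e.
move=> z zE; left; have [//|h] := H z zE.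
by move: qk; rewrite /dvdn -h.
Qed.

Lemma k0_good E q k0 : ~~ (q %| k0) -> (forall z, z \in E -> (q %| z) \/ z = k0 %[mod q]) ->
  good E q k0.
Proof.
move=> nk H x xE nx; right; have [h|h] := H x xE; first by rewrite h in nx.
by rewrite h.
Qed.

Lemma CRT_pt q y N : prime q -> exists y', 0 < y' /\ y' = y %[mod q] /\
  forall r, prime r -> r < N -> r != q -> r %| y'.
Proof.
move=> pq.
set S := [seq r <- iota 0 N | prime r && (r != q)].
have Sp : forall r, r \in S -> prime r by move=> r; rewrite mem_filter => /andP [/andP []].
set M := \prod_(r <- S) r.
have M0 : 0 < M := prodS_gt0 Sp.
have cqM : coprime q M.
  apply: coprime_prodS => r; rewrite mem_filter => /andP [/andP [pr rq] _].
  by rewrite prime_coprime // dvdn_prime2 // eq_sym.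
exists (chinese q M y 0 + q * M); split.
  apply: leq_trans (_ : 0 < q * M) (leq_addl _ _); by rewrite muln_gt0 (prime_gt0 pq) M0.
split; first by rewrite addnC mulnC modnMDl chinese_modl.
move=> r pr rN rq.
have rM : r %| M by apply: dvd_prodS; rewrite mem_filter pr rq mem_iota /=; lia.
apply: dvdn_trans rM _.
by rewrite /dvdn addnC modnMDl chinese_modr // mod0n.
Qed.

Lemma mod_add_dvd x d q : x + d = x %[mod q] -> q %| d.
Proof.
move=> e; have : (x + d == x %[mod q]) by rewrite e.
by rewrite eqn_mod_dvd ?leq_addr // addKn.
Qed.

Lemma NotInf E p : prime p -> odd p -> finite_pos E ->
  (exists k0, ~~ (p %| k0) /\ forall z, z \in E -> (p %| z) \/ z = k0 %[mod p]) ->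
  ~ feq (FE E) Finf.
Proof.
move=> pp op fp [k0 [nk Hk]] [_ H].
have p1 : 1 < p := prime_gt1 pp.
have HB : Finf (fun y => p %| y).
  apply: (FE_Finf (E := [:: 1; 2])) => //.
  apply: G_FE; first by move=> x; rewrite !inE => /orP [/eqP ->|/eqP ->].
  exists p.+1 => y y0 Hg; case: (boolP (p %| y)) => // py; exfalso.
  have Hg' := Hg p pp (ltnSn p).
  have n1 : ~~ (p %| 1) by rewrite dvdn1; apply/eqP => e; move: p1; rewrite e.
  have n2 : ~~ (p %| 2).
    rewrite dvdn_prime2 //; apply/eqP => e; by move: op; rewrite e.
  have [h|h1] := Hg' 1 (mem_head _ _) n1; first by rewrite h in py.
  have m2 : 2 \in [:: 1; 2] by [].
  have [h|h2] := Hg' 2 m2 n2; first by rewrite h in py.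
  have : 1 + 1 = 1 %[mod p] by rewrite -h2 h1.
  by move/mod_add_dvd; rewrite (negbTE n1).
have [N HN] := FE_G (H _ HB).
have [y' [y0 [ey Hr]]] := CRT_pt k0 N pp.
have : p %| y'.
  apply: HN => // q pq qN; case: (eqVneq q p) => [->|qp].
    by apply: good_mod (esym ey) _; apply: k0_good.
  by apply: good_dvd; apply: Hr.
by move: nk; rewrite /dvdn -ey => /negbTE ->.
Qed.

Lemma part1 E : E <> [::] -> finite_pos E -> (forall q, in_AE E q -> ~~ odd q) ->
  feq (FE E) Finf.
Proof.
move=> Ene fp H; split => B; first exact: FE_Finf.
move=> /Finf_G [A [N HN]]; apply: G_FE => //; exists N => y y0 Hg.
apply: HN => // q pq qN; have [->|oq] := even_prime pq; first exact: good_2.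
apply: good_dvd; apply: (good_notA (E := E)) => //; last exact: Hg.
by move=> /H; rewrite oq.
Qed.

Lemma fsub_good E E' : finite_pos E -> fsub (FE E) (FE E') ->
  forall q y, prime q -> good E' q y -> good E q y.
Proof.
move=> fp Hs q y pq Hy.
have HB : FE E (good E q).
  apply: G_FE => //; exists q.+1 => z z0 Hz; exact: Hz.
have [N HN] := FE_G (Hs _ HB).
have [y' [y0 [ey Hr]]] := CRT_pt y N pq.
apply: (good_mod ey); apply: HN => // r pr rN.
case: (eqVneq r q) => [->|rq]; first exact: good_mod (esym ey) Hy.
by apply: good_dvd; apply: Hr.
Qed.

Lemma fsub_of_good E E' : finite_pos E ->
  (forall q y, prime q -> good E q y -> good E' q y) -> fsub (FE E') (FE E).
Proof.
move=> fp H B /FE_G [N HN]; apply: G_FE => //; exists N => y y0 Hg.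
apply: HN => // q pq qN; apply: H => //; exact: Hg.
Qed.

Lemma good_pair E q y x1 x2 : good E q y -> ~~ (q %| y) -> x1 \in E -> x2 \in E ->
  ~~ (q %| x1) -> ~~ (q %| x2) -> x1 = x2 %[mod q].
Proof.
move=> H ny m1 m2 n1 n2.
have [h|h1] := H x1 m1 n1; first by rewrite h in ny.
have [h|h2] := H x2 m2 n2; first by rewrite h in ny.
by rewrite -h1 h2.
Qed.

Lemma three k p q y : prime p -> prime q -> odd q -> q != p ->
  good [:: k; k + p; k + p + p] q y -> q %| y.
Proof.
move=> pp pq oq qp H; case: (boolP (q %| y)) => // ny; exfalso.
have nqp : ~~ (q %| p) by rewrite dvdn_prime2.
have nq2p : ~~ (q %| p + p).
  rewrite addnn -mul2n Euclid_dvdM // negb_or nqp andbT dvdn_prime2 //.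
  by apply/eqP => e; move: oq; rewrite e.
have m1 : k \in [:: k; k + p; k + p + p] by rewrite mem_head.
have m2 : k + p \in [:: k; k + p; k + p + p] by rewrite !inE eqxx orbT.
have m3 : k + p + p \in [:: k; k + p; k + p + p] by rewrite !inE eqxx !orbT.
case: (boolP (q %| k)) => qk.
  have n2 : ~~ (q %| k + p) by rewrite dvdn_addr.
  have n3 : ~~ (q %| k + p + p) by rewrite -addnA dvdn_addr.
  have := good_pair H ny m3 m2 n3 n2.
  by move/mod_add_dvd; rewrite (negbTE nqp).
case: (boolP (q %| k + p)) => qkp.
  have n3 : ~~ (q %| k + p + p) by rewrite dvdn_addr.
  have := good_pair H ny m3 m1 n3 qk.
  by rewrite -addnA => /mod_add_dvd; rewrite (negbTE nq2p).
have := good_pair H ny m2 m1 qkp qk.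
by move/mod_add_dvd; rewrite (negbTE nqp).
Qed.

Theorem lemma3p10 (E : seq nat) :
  E <> [::] -> finite_pos E ->
  (maximal_FE E <->
   exists p, prime p /\ odd p /\ ~ in_PiE E p /\
             forall q, in_AE E q <-> (q = 2 \/ q = p)).
Proof.
move=> Ene fp; split.
- move=> [nf Hmax].
  have [p [Ap op]] : exists p, in_AE E p /\ odd p.
    apply: NNPP => hn; apply: nf; apply: part1 => // q Aq; apply/negP => oq.
    by apply: hn; exists q.
  have pp : prime p by case: Ap.
  have [k0 [nk Hk]] := AE_k0 Ap.
  set E' := [:: k0; k0 + p; k0 + p + p].
  have Hk' : forall z, z \in E' -> (p %| z) \/ z = k0 %[mod p].
    move=> z; rewrite !inE => /or3P [] /eqP ->; right.
    - by [].
    - by rewrite modnDr.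
    - by rewrite !modnDr.
  have k00 : 0 < k0 by have [k00|//] := posnP k0; rewrite k00 dvdn0 in nk.
  have fp' : finite_pos E'.
    move=> z; rewrite !inE => /or3P [] /eqP ->; lia.
  have nf' : ~ feq (FE E') Finf by apply: NotInf pp op fp' _; exists k0.
  have sub : fsub (FE E) (FE E').
    apply: (fsub_of_good (E := E') (E' := E)) => // q y pq Hy.
    have [->|oq] := even_prime pq; first exact: good_2.
    case: (eqVneq q p) => [eqp|qp]; first subst q.
      case: (boolP (p %| y)) => py; first exact: good_dvd.
      have [h|h] := Hy k0 (mem_head _ _) nk; first by rewrite h in py.
      by apply: (good_mod (esym h)); apply: k0_good.
    by apply: good_dvd; apply: (three pp pq oq qp Hy).
  have back := fsub_good fp' (Hmax E' fp' nf' sub).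
  exists p; split => //; split => //; split.
  + move=> [_ Hall].
    have g : good E p (k0 + k0) by move=> x xE nx; rewrite Hall in nx.
    have [h|h] := back p _ pp g k0 (mem_head _ _) nk.
      move: h; rewrite addnn -mul2n Euclid_dvdM // (negbTE nk) orbF dvdn_prime2 //.
      by move/eqP => e; move: op; rewrite e.
    by move: h => /mod_add_dvd; rewrite (negbTE nk).
  + move=> q; split.
    * move=> Aq; have pq : prime q by case: Aq.
      have [->|oq] := even_prime pq; first by left.
      case: (eqVneq q p) => [->|qp]; first by right.
      exfalso; have [kq [nkq Hkq]] := AE_k0 Aq.
      have g' := back q kq pq (k0_good nkq Hkq).
      by have := three pp pq oq qp g'; rewrite (negbTE nkq).
    * case=> [->|->] //; split => //; exists 1; split => // z zE.
      case: (boolP (2 %| z)) => nz; [by left | right].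
      by move: nz; rewrite dvdn2 negbK modn2 => ->.
- move=> [p [pp [op [nPi HA]]]].
  have Ap : in_AE E p by apply/HA; right.
  split; first by apply: NotInf pp op fp (AE_k0 Ap).
  move=> E' fp' nf' sub.
  have fwd := fsub_good fp sub.
  apply: fsub_of_good => // q y pq Hy.
  case: (eqVneq E' [::]) => [->|E'ne]; first exact: good_nil.
  have [p' [Ap' op']] : exists p', in_AE E' p' /\ odd p'.
    apply: NNPP => hn; apply: nf'; apply: part1 => // [|q' Aq']; first by apply/eqP.
    by apply/negP => oq; apply: hn; exists q'.
  have pp' : prime p' by case: Ap'.
  have [k' [nk' Hk']] := AE_k0 Ap'.
  have g' := k0_good nk' Hk'.
  have gE := fwd p' k' pp' g'.
  have ep : p' = p.
    case: (eqVneq p' p) => // np; exfalso.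
    have nA : ~ in_AE E p'.
      by move/HA => [e|e]; [move: op'; rewrite e | move: np; rewrite e eqxx].
    by have := good_notA pp' nA gE; rewrite (negbTE nk').
  subst p'.
  have [->|oq] := even_prime pq; first exact: good_2.
  case: (eqVneq q p) => [eqp|qp]; first subst q.
    case: (boolP (p %| y)) => py; first exact: good_dvd.
    have [x0 [x0E nx0]] : exists x0, x0 \in E /\ ~~ (p %| x0).
      apply: NNPP => hn; apply: nPi; split => // z zE; apply: NNPP => nz.
      by apply: hn; exists z; split => //; apply/negP.
    have [h|h1] := Hy x0 x0E nx0; first by rewrite h in py.
    have [h|h2] := gE x0 x0E nx0; first by rewrite h in nk'.
    by apply: good_mod g'; rewrite h2 h1.
  apply: good_dvd; apply: (good_notA (E := E)) pq _ Hy.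
  by move/HA => [e|e]; [move: oq; rewrite e | move: qp; rewrite e eqxx].
Qed.
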